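(* Let $d\ge 1$, $\varepsilon>0$, let $Q_k,R_k\in\mathbb{R}^{d\times d}$ be symmetric positive definite matrices and $x_k^*\in\mathbb{R}^d$. Define for $x,y\in\mathbb{R}^d$ $$r_k(x,y)=\exp\Big(-\tfrac{1}{\varepsilon}\Big[\tfrac12 (x-x_k^* )^T Q_k (x-x_k^* )+\tfrac12 (y-x)^T R_k (y-x)\Big]\Big).$$ Let $P_{k+1}^{\ominus}\in\mathbb{R}^{d\times d}$ be symmetric positive definite, $\alpha_{k+1}^{\ominus}\in\mathbb{R}^d$, and $\phi_{k+1}^{\ominus}(y)=\mathcal{N}(y\mid \alpha_{k+1}^{\ominus},(P_{k+1}^{\ominus})^{-1})$. Then the function $$\phi_k^{\ominus}(x)=\int_{\mathbb{R}^d} r_k(x,y)\,\phi_{k+1}^{\ominus}(y)\,dy$$ is, up to a positive multiplicative constant, the Gaussian density $\mathcal{N}(x\mid \alpha_k^{\ominus},(P_k^{\ominus})^{-1})$, where $$P_k^{\ominus}=Q_k/\varepsilon+\big(\varepsilon R_k^{-1}+(P_{k+1}^{\ominus})^{-1}\big)^{-1}=Q_k/\varepsilon+P_{k+1}^{\ominus}-P_{k+1}^{\ominus}\big(R_k/\varepsilon+P_{k+1}^{\ominus}\big)^{-1}P_{k+1}^{\ominus},$$ $$\alpha_k^{\ominus}=(P_k^{\ominus})^{-1}\Big(\tfrac{1}{\varepsilon}Q_k x_k^*+\big(\varepsilon R_k^{-1}+(P_{k+1}^{\ominus})^{-1}\big)^{-1}\alpha_{k+1}^{\ominus}\Big)=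\alpha_{k+1}^{\ominus}+(P_k^{\ominus})^{-1}\tfrac{1}{\varepsilon}Q_k\,(x_k^*-\alpha_{k+1}^{\ominus}).$$
   Context: $\mathcal{N}(x\mid\mu,\Sigma)$ denotes the Gaussian density on $\mathbb{R}^d$ with mean $\mu$ and covariance $\Sigma$. The function $r_k$ is the (unnormalized) pairwise reference measure $\exp(-\ell_k/\varepsilon)$ associated with the LQR transition cost $\ell_k(x_k,x_{k+1})=\frac12(x_k-x_k^* )^TQ_k(x_k-x_k^* )+\frac12(x_{k+1}-x_k)^TR_k(x_{k+1}-x_k)$, and $\phi^{\ominus}_k$ is the backward-propagated Gibbs potential of the Schrödinger system. *)

(* Defs.v *)
From HB Require Import structures.
From mathcomp Require Import all_boot all_order all_algebra.
From mathcomp Require Import all_classical all_reals all_analysis.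
Set Implicit Arguments. Unset Strict Implicit. Unset Printing Implicit Defensive.
Import Order.TTheory GRing.Theory Num.Theory.
Local Open Scope ring_scope.

Definition qform {R : realType} {n : nat} (A : 'M[R]_n) (v : 'cV[R]_n) : R :=
  (v^T *m A *m v) ord0 ord0.

Definition spd {R : realType} {n : nat} (A : 'M[R]_n) : Prop :=
  A^T = A /\ forall v : 'cV[R]_n, v != 0 -> 0 < qform A v.

Definition gauss_density {R : realType} {n : nat}
  (mu : 'cV[R]_n) (Sigma : 'M[R]_n) (x : 'cV[R]_n) : R :=
  (Num.sqrt ((2 * pi) ^+ n * \det Sigma))^-1 *
  expR (- (2^-1 * qform (invmx Sigma) (x - mu))).

(* Lebesgue integral over R^n, defined as the iterated one-dimensional
   Lebesgue integral over the coordinates (for nonnegative measurable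
   integrands this coincides with the n-dimensional Lebesgue integral by
   Tonelli; MathComp-Analysis has no Lebesgue measure on R^n). *)
Fixpoint integral_Rn {R : realType} (n : nat) : ('cV[R]_n -> \bar R) -> \bar R :=
  match n return ('cV[R]_n -> \bar R) -> \bar R with
  | 0 => fun f => f 0
  | n'.+1 => fun f =>
      (\int[@lebesgue_measure R]_(t in [set: R])
          integral_Rn (fun v : 'cV[R]_n' =>
                         f (col_mx (t%:M : 'M[R]_1) v : 'cV[R]_(n'.+1))))%E
  end.

Definition lqr_ref {R : realType} {n : nat} (eps : R) (Q Rk : 'M[R]_n)
  (xs : 'cV[R]_n) (x y : 'cV[R]_n) : R :=
  expR (- (eps^-1 * (2^-1 * qform Q (x - xs) + 2^-1 * qform Rk (y - x)))).

(* Main.v *)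
Require Import Defs.
From HB Require Import structures.
From mathcomp Require Import all_boot all_order all_algebra.
From mathcomp Require Import all_classical all_reals all_analysis.
From mathcomp Require Import normal_distribution ring lra.
Import Order.TTheory GRing.Theory Num.Theory.
Local Open Scope ring_scope.

Lemma gauss1 (R : realType) (s : R) : 0 < s -> exists2 K : R, 0 < K &
  forall b g : R,
  (\int[@lebesgue_measure R]_(t in [set: R]) (expR (- (2^-1 * (s * t ^+ 2)) + b * t + g))%:E)%E
  = (K * expR (2^-1 * (b ^+ 2 / s) + g))%:E.
Proof.
move=> s0.
set sg := (Num.sqrt s)^-1.
have sg0 : sg != 0 by rewrite invr_eq0 gt_eqF // sqrtr_gt0.
have sg2 : sg ^+ 2 = s^-1 by rewrite exprVn sqr_sqrtr // ltW.
exists (normal_peak sg)^-1; first by rewrite invr_gt0 normal_peak_gt0.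
move=> b g.
have -> : (fun t => (expR (- (2^-1 * (s * t ^+ 2)) + b * t + g))%:E) =
  (fun t => (((normal_peak sg)^-1 * expR (2^-1 * (b ^+ 2 / s) + g)) * normal_pdf (b / s) sg t)%:E).
  apply/funext => t; congr EFin.
  have pn : normal_peak sg != 0 by rewrite gt_eqF // normal_peak_gt0.
  rewrite normal_pdfE //= (mulrC (normal_peak sg)^-1) -mulrA (mulKf pn).
  rewrite /normal_fun -expRD sg2; congr expR.
  rewrite -mulr_natr; field; by rewrite gt_eqF.
under eq_integral do rewrite EFinM.
rewrite integralZl //; last exact: integrable_normal_pdf.
by rewrite integral_normal_pdf mule1.
Qed.

Section S.
Variable R : realType.

Lemma sc_tr k (X : 'M[R]_(1,k)) (Y : 'M[R]_(k,1)) : (X *m Y) 0 0 = (Y^T *m X^T) 0 0.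
Proof. by rewrite -trmx_mul [RHS]mxE. Qed.

Lemma qf_block0 n (a t : R) (u v : 'cV[R]_n) (B : 'M[R]_n) :
  ((col_mx t%:M v : 'cV[R]_(1+n))^T *m (block_mx a%:M u^T u B : 'M[R]_(1+n)) *m (col_mx t%:M v : 'cV[R]_(1+n))) 0 0
  = a * t ^+ 2 + 2 * t * (u^T *m v) 0 0 + (v^T *m B *m v) 0 0.
Proof.
rewrite tr_col_mx mul_row_block mul_row_col !mulmxDl tr_scalar_mx.
rewrite !mul_scalar_mx -!mulmxA !mul_mx_scalar !mulmxA -!scalemxAl !mxE.
have -> : \sum_j v^T 0 j * (t *: u) j 0 = t * \sum_j u^T 0 j * v j 0.
  by rewrite mulr_sumr; apply: eq_bigr => j _; rewrite !mxE; ring.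
rewrite eqxx mulr1n; ring.
Qed.

Lemma qf_block n (a t : R) (u v : 'cV[R]_n) (B : 'M[R]_n) :
  qform (block_mx a%:M u^T u B : 'M[R]_(n.+1)) (col_mx t%:M v : 'cV[R]_(n.+1))
  = a * t ^+ 2 + 2 * t * (u^T *m v) 0 0 + qform B v.
Proof. exact: qf_block0. Qed.


Lemma sc11 (x : R) : (x%:M : 'M[R]_1) 0 0 = x.
Proof. by rewrite mxE eqxx mulr1n. Qed.

Lemma lin_block0 n (b1 t : R) (b2 v : 'cV[R]_n) :
  ((col_mx b1%:M b2 : 'cV[R]_(1+n))^T *m (col_mx t%:M v : 'cV[R]_(1+n))) 0 0
  = b1 * t + (b2^T *m v) 0 0.
Proof.
rewrite tr_col_mx mul_row_col tr_scalar_mx mul_scalar_mx.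
by rewrite scale_scalar_mx [b2^T *m v]mx11_scalar -raddfD /= !sc11.
Qed.

Lemma lin_block n (b1 t : R) (b2 v : 'cV[R]_n) :
  ((col_mx b1%:M b2 : 'cV[R]_(n.+1))^T *m (col_mx t%:M v : 'cV[R]_(n.+1))) 0 0
  = b1 * t + (b2^T *m v) 0 0.
Proof. exact: lin_block0. Qed.

Lemma Amul0 n (a z1 : R) (u w : 'cV[R]_n) (B : 'M[R]_n) :
  (block_mx a%:M u^T u B : 'M[R]_(1+n)) *m (col_mx z1%:M w : 'cV[R]_(1+n))
  = col_mx ((a * z1 + (u^T *m w) 0 0)%:M) (z1 *: u + B *m w).
Proof.
rewrite mul_block_col -scalar_mxM mul_mx_scalar; congr col_mx.
by rewrite [u^T *m w]mx11_scalar sc11 raddfD.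
Qed.

Lemma Amul n (a z1 : R) (u w : 'cV[R]_n) (B : 'M[R]_n) :
  (block_mx a%:M u^T u B : 'M[R]_(n.+1)) *m (col_mx z1%:M w : 'cV[R]_(n.+1))
  = (col_mx ((a * z1 + (u^T *m w) 0 0)%:M) (z1 *: u + B *m w) : 'cV[R]_(n.+1)).
Proof. exact: Amul0. Qed.

Lemma qf_inv n (A : 'M[R]_n) (z b : 'cV[R]_n) : A \in unitmx -> A *m z = b ->
  qform (invmx A) b = (b^T *m z) 0 0.
Proof. by move=> uA <-; rewrite /qform -mulmxA mulKmx. Qed.

Lemma det_block0 n (a : R) (u : 'cV[R]_n) (B : 'M[R]_n) : B \in unitmx ->
  \det (block_mx a%:M u^T u B : 'M[R]_(1+n)) = (a - qform (invmx B) u) * \det B.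
Proof.
move=> uB.
have -> : (block_mx a%:M u^T u B : 'M[R]_(1+n)) =
   block_mx 1%:M (u^T *m invmx B) 0 1%:M *m block_mx (a - qform (invmx B) u)%:M 0 u B.
  rewrite mulmx_block !mul1mx !mul0mx ?mulmx0 !add0r ?addr0 mulmxKV //.
  congr block_mx; rewrite [u^T *m invmx B *m u]mx11_scalar -raddfD /=.
  by rewrite /qform subrK.
by rewrite det_mulmx det_ublock det_lblock !det1 !mul1r det_scalar1.
Qed.

Lemma det_block n (a : R) (u : 'cV[R]_n) (B : 'M[R]_n) : B \in unitmx ->
  \det (block_mx a%:M u^T u B : 'M[R]_(n.+1)) = (a - qform (invmx B) u) * \det B.
Proof. exact: det_block0. Qed.

Lemma bdec n (b : 'cV[R]_(n.+1)) : exists (b1 : R) (b2 : 'cV[R]_n), b = (col_mx b1%:M b2 : 'cV[R]_(n.+1)).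
Proof.
exists (usubmx (b : 'cV[R]_(1+n)) 0 0), (dsubmx (b : 'cV[R]_(1+n))).
by rewrite -mx11_scalar vsubmxK.
Qed.

Lemma Adec n (A : 'M[R]_(n.+1)) : A^T = A ->
  exists (a : R) (u : 'cV[R]_n) (B : 'M[R]_n), A = (block_mx a%:M u^T u B : 'M[R]_(n.+1)).
Proof.
move=> sA.
exists (ulsubmx (A : 'M[R]_(1+n)) 0 0), (dlsubmx (A : 'M[R]_(1+n))), (drsubmx (A : 'M[R]_(1+n))).
rewrite -mx11_scalar.
have -> : (dlsubmx (A : 'M[R]_(1+n)))^T = ursubmx (A : 'M[R]_(1+n)).
  by rewrite trmx_dlsub; congr ursubmx; exact: sA.
by rewrite submxK.
Qed.

Lemma spd_blockB {n} (a : R) (u : 'cV[R]_n) (B : 'M[R]_n) :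
  spd (block_mx a%:M u^T u B : 'M[R]_(n.+1)) -> spd B.
Proof.
case=> sA pA; split.
  have : (block_mx a%:M u^T u B : 'M[R]_(1+n))^T = block_mx a%:M u^T u B := sA.
  by rewrite tr_block_mx => /eq_block_mx [].
move=> v v0.
have := pA (col_mx 0%:M v : 'cV[R]_(n.+1)).
rewrite qf_block.
have -> : a * 0 ^+ 2 + 2 * 0 * (u^T *m v) 0 0 + qform B v = qform B v by ring.
apply.
apply/negP => /eqP h.
have : (col_mx 0%:M v : 'cV[R]_(1+n)) = col_mx 0 0 := etrans h (esym (@col_mx0 _ 1 n 1)).
by move/eq_col_mx => [_ h2]; move: v0; rewrite h2 eqxx.
Qed.

Lemma mxDE m n (X Y : 'M[R]_(m,n)) i j : (X + Y) i j = X i j + Y i j.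
Proof. by rewrite mxE. Qed.
Lemma mxNE m n (X : 'M[R]_(m,n)) i j : (- X) i j = - X i j.
Proof. by rewrite mxE. Qed.
Lemma mxZE m n k (X : 'M[R]_(m,n)) i j : (k *: X) i j = k * X i j.
Proof. by rewrite mxE. Qed.

Lemma qf_sub n (Bi : 'M[R]_n) (b2 u : 'cV[R]_n) t : Bi^T = Bi ->
  qform Bi (b2 - t *: u) = qform Bi b2 - 2 * t * (u^T *m Bi *m b2) 0 0 + t ^+ 2 * qform Bi u.
Proof.
move=> sBi; rewrite /qform mulmxBr [(b2 - _)^T]linearB /= [(_ *: u)^T]linearZ /= !mulmxBl.
rewrite -!mulmxA -!scalemxAr !mulmxA -!scalemxAl !(mxDE, mxNE, mxZE).
have -> : (b2^T *m Bi *m u) 0 0 = (u^T *m Bi *m b2) 0 0.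
  by rewrite sc_tr -mulmxA trmx_mul trmxK sBi mulmxA.
ring.
Qed.

Lemma expR_lnM (k x : R) : 0 < k -> k * expR x = expR (ln k + x).
Proof. by move=> k0; rewrite expRD lnK. Qed.

Definition GaussOK {n : nat} (A : 'M[R]_n) : Prop :=
  0 < \det A /\ exists2 K : R, 0 < K & forall (b : 'cV[R]_n) (c : R),
  integral_Rn (fun y => (expR (- (2^-1 * qform A y) + (b^T *m y) 0 0 + c))%:E)
  = (K * expR (2^-1 * qform (invmx A) b + c))%:E.

Lemma step n (a : R) (u : 'cV[R]_n) (B : 'M[R]_n) :
  spd (block_mx a%:M u^T u B : 'M[R]_(n.+1)) -> GaussOK B ->
  GaussOK (block_mx a%:M u^T u B : 'M[R]_(n.+1)).
Proof.
move=> hA [dB [KB KB0 hB]].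
have [sB _] := spd_blockB _ _ _ hA.
have uB : B \in unitmx by rewrite unitmxE unitfE gt_eqF.
set Bi := invmx B.
have sBi : Bi^T = Bi by rewrite /Bi trmx_inv sB.
set q := qform Bi u.
set s := a - q.
have s0 : 0 < s.
  have := hA.2 (col_mx 1%:M (- (Bi *m u)) : 'cV[R]_(n.+1)).
  rewrite qf_block.
  have -> : (u^T *m - (Bi *m u)) 0 0 = - q by rewrite mulmxN mxNE mulmxA.
  have -> : qform B (- (Bi *m u)) = q.
    rewrite /qform mulmxN [(- _)^T]linearN /= !mulNmx opprK trmx_mul sBi -!mulmxA mulKVmx //.
    by rewrite mulmxA.
  have -> : a * 1 ^+ 2 + 2 * 1 * - q + q = s by rewrite /s; ring.
  apply; apply/negP => /eqP h.
  have : (col_mx 1%:M (- (Bi *m u)) : 'cV[R]_(1+n)) = col_mx 0 0 := etrans h (esym (@col_mx0 _ 1 n 1)).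
  move/eq_col_mx => [h1 _].
  by move: (congr1 (fun M : 'M[R]_1 => M 0 0) h1); rewrite /= sc11 mxE; apply/eqP; rewrite oner_eq0.
have dA : 0 < \det (block_mx a%:M u^T u B : 'M[R]_(n.+1)).
  by rewrite det_block // mulr_gt0.
split => //.
have [K1 K10 h1] := gauss1 _ _ s0.
exists (K1 * KB); first by rewrite mulr_gt0.
move=> b c.
have [b1 [b2 ->]] := bdec _ b.
set p := (u^T *m Bi *m b2) 0 0.
set r := qform Bi b2.
have s0' : a - q != 0 by rewrite gt_eqF.
rewrite [LHS]/=.
transitivity (\int[lebesgue_measure]_(t in [set: R])
   (expR (- (2^-1 * (s * t ^+ 2)) + (b1 - p) * t + (2^-1 * r + c + ln KB)))%:E)%E.
  apply: eq_integral => t _.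
  rewrite (_ : (fun v : 'cV[R]_n => _) = (fun v => (expR (- (2^-1 * qform B v)
     + ((b2 - t *: u)^T *m v) 0 0 + (c + b1 * t - 2^-1 * (a * t ^+ 2))))%:E)); last first.
    apply/funext => v; rewrite qf_block lin_block; congr (EFin (expR _)).
    rewrite [(b2 - _)^T]linearB /= [(t *: u)^T]linearZ /= mulmxBl -scalemxAl !(mxDE, mxNE, mxZE).
    move: ((u^T *m v) 0 0) ((b2^T *m v) 0 0) (qform B v) => x y z; by field.
  rewrite (hB (b2 - t *: u) (c + b1 * t - 2^-1 * (a * t ^+ 2))) -/Bi qf_sub // -/p -/r -/q expR_lnM //; congr (EFin (expR _)).
  rewrite /s; by field.
rewrite h1; congr EFin.
have hq : qform (invmx (block_mx a%:M u^T u B : 'M[R]_(n.+1))) (col_mx b1%:M b2 : 'cV[R]_(n.+1))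
    = (b1 - p) ^+ 2 / s + r.
  set z1 := (b1 - p) / s.
  set w := Bi *m b2 - z1 *: (Bi *m u).
  rewrite (qf_inv _ _ (col_mx z1%:M w : 'cV[R]_(n.+1))).
  - rewrite lin_block /w mulmxBr -scalemxAr !(mxDE, mxNE, mxZE) -/r.
    have -> : (b2^T *m (Bi *m u)) 0 0 = p by rewrite sc_tr trmx_mul sBi trmxK.
    have -> : (b2^T *m (Bi *m b2)) 0 0 = r by rewrite /r /qform mulmxA.
    rewrite /z1 /s; field; exact: s0'.
  - by rewrite unitmxE unitfE gt_eqF.
  - rewrite Amul.
    have -> : a * z1 + (u^T *m w) 0 0 = b1.
      have -> : (u^T *m w) 0 0 = p - z1 * q.
        by rewrite /w mulmxBr -scalemxAr !(mxDE, mxNE, mxZE) !mulmxA.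
      rewrite /z1 /s; field; exact: s0'.
    have -> : z1 *: u + B *m w = b2.
      rewrite /w mulmxBr -scalemxAr !mulmxA /Bi mulmxV // !mul1mx.
      by rewrite addrC subrK.
    by [].
rewrite hq -mulrA !expR_lnM //; congr expR; by field.
Qed.

Lemma gauss_all n (A : 'M[R]_n) : spd A -> GaussOK A.
Proof.
elim: n A => [|n IH] A hA.
  split; first by rewrite det_mx00 ltr01.
  exists 1; first exact: ltr01.
  move=> b c /=.
  by rewrite /qform [b]flatmx0 !(mulmx0, mul0mx, trmx0) !mxE mul1r mulr0 oppr0 !add0r.
have [a [u [B eA]]] := Adec _ A hA.1.
rewrite eA in hA *.
apply: step => //; apply: IH; exact: spd_blockB hA.
Qed.

End S.

Section S3.
Variable R : realType.

Definition bil {n} (G : 'M[R]_n) (u x : 'cV[R]_n) : R := (u^T *m G *m x) 0 0.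

Lemma bil_sym {n} (G : 'M[R]_n) u x : G^T = G -> bil G u x = bil G x u.
Proof. by move=> sG; rewrite /bil sc_tr trmx_mul trmxK sG mulmxA. Qed.

Lemma qadd {n} (G : 'M[R]_n) u v : G^T = G ->
  qform G (u + v) = qform G u + 2 * bil G v u + qform G v.
Proof.
move=> sG; rewrite /qform [(u + v)^T]linearD /= !mulmxDl !mulmxDr !(mxDE, mxNE, mxZE).
have -> : (u^T *m G *m v) 0 0 = bil G v u by rewrite -bil_sym.
rewrite /bil; ring.
Qed.

Lemma qsub {n} (G : 'M[R]_n) u v : G^T = G ->
  qform G (u - v) = qform G u - 2 * bil G v u + qform G v.
Proof.
move=> sG; rewrite qadd // /bil /qform [(- v)^T]linearN /= !mulNmx mulmxN !mxNE opprK.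
ring.
Qed.

Lemma qmatD {n} (G H : 'M[R]_n) x : qform (G + H) x = qform G x + qform H x.
Proof. by rewrite /qform mulmxDr mulmxDl mxDE. Qed.

Lemma qmatN {n} (G : 'M[R]_n) x : qform (- G) x = - qform G x.
Proof. by rewrite /qform mulmxN mulNmx mxNE. Qed.

Lemma qmatZ {n} (G : 'M[R]_n) k x : qform (k *: G) x = k * qform G x.
Proof. by rewrite /qform -scalemxAr -scalemxAl mxZE. Qed.

Lemma bmatZ {n} (G : 'M[R]_n) k u x : bil (k *: G) u x = k * bil G u x.
Proof. by rewrite /bil -scalemxAr -scalemxAl mxZE. Qed.

Lemma qmul {n} (G H : 'M[R]_n) x : qform G (H *m x) = qform (H^T *m G *m H) x.
Proof. by rewrite /qform trmx_mul !mulmxA. Qed.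

Lemma bmul {n} (G H J : 'M[R]_n) u x : bil G (H *m u) (J *m x) = bil (H^T *m G *m J) u x.
Proof. by rewrite /bil trmx_mul !mulmxA. Qed.

Lemma lin_bil {n} (G : 'M[R]_n) u x : ((G *m u)^T *m x) 0 0 = bil G^T u x.
Proof. by rewrite /bil trmx_mul. Qed.

Lemma linD {n} (u v x : 'cV[R]_n) : ((u + v)^T *m x) 0 0 = (u^T *m x) 0 0 + (v^T *m x) 0 0.
Proof. by rewrite [(u + v)^T]linearD /= mulmxDl mxDE. Qed.

Lemma spd_unit {n} (A : 'M[R]_n) : spd A -> A \in unitmx.
Proof. by move=> /gauss_all [d _]; rewrite unitmxE unitfE gt_eqF. Qed.

Lemma spd_det {n} (A : 'M[R]_n) : spd A -> 0 < \det A.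
Proof. by move=> /gauss_all []. Qed.

Lemma spdD {n} (A B : 'M[R]_n) : spd A -> spd B -> spd (A + B).
Proof.
move=> [sA pA] [sB pB]; split; first by rewrite linearD /= sA sB.
by move=> v v0; rewrite qmatD addr_gt0 // ?pA ?pB.
Qed.

Lemma spdZ {n} (A : 'M[R]_n) k : 0 < k -> spd A -> spd (k *: A).
Proof.
move=> k0 [sA pA]; split; first by rewrite linearZ /= sA.
by move=> v v0; rewrite qmatZ mulr_gt0 // pA.
Qed.

Lemma spd_inv {n} (A : 'M[R]_n) : spd A -> spd (invmx A).
Proof.
move=> hA; have uA := spd_unit A hA; case: hA => sA pA; split.
  by rewrite trmx_inv sA.
move=> v v0.
have -> : qform (invmx A) v = qform A (invmx A *m v).
  by rewrite qmul trmx_inv sA mulVmx // mul1mx.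
apply: pA; apply/negP => /eqP h.
by move: v0; rewrite -(mulKVmx uA v) h mulmx0 eqxx.
Qed.

End S3.
Arguments spdZ {R n A k}.
Arguments spdD {R n A B}.
Arguments spd_inv {R n A}.
Arguments spd_unit {R n A}.
Arguments spd_det {R n A}.
Arguments gauss_all {R n A}.

Theorem mainTheorem1 (R : realType) (d : nat) (hd : (1 <= d)%N) (eps : R)
  (heps : 0 < eps) (Q Rk P1 : 'M[R]_d) (xs a1 : 'cV[R]_d)
  (hQ : spd Q) (hR : spd Rk) (hP1 : spd P1) :
  let phi1 := fun y : 'cV[R]_d => gauss_density a1 (invmx P1) y in
  let phik := fun x : 'cV[R]_d =>
    integral_Rn (fun y : 'cV[R]_d => ((lqr_ref eps Q Rk xs x y) * phi1 y)%:E) in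
  let M := invmx (eps *: invmx Rk + invmx P1) in
  let Pk := eps^-1 *: Q + M in
  let ak := invmx Pk *m (eps^-1 *: Q *m xs + M *m a1) in
  [/\ Pk = eps^-1 *: Q + P1 - P1 *m invmx (eps^-1 *: Rk + P1) *m P1,
      ak = a1 + invmx Pk *m (eps^-1 *: Q) *m (xs - a1) &
      exists2 c : R, 0 < c &
        forall x : 'cV[R]_d, phik x = (c * gauss_density ak (invmx Pk) x)%:E].
Proof.
move=> phi1 phik M Pk ak.
have ei : 0 < eps^-1 by rewrite invr_gt0.
have spdS : spd (eps^-1 *: Rk) := spdZ ei hR.
have spdQe : spd (eps^-1 *: Q) := spdZ ei hQ.
have spdA : spd (eps^-1 *: Rk + P1) := spdD spdS hP1.
have uA := spd_unit spdA.
have uR := spd_unit hR.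
have uP1 := spd_unit hP1.
have spdN : spd (eps *: invmx Rk + invmx P1) := spdD (spdZ heps (spd_inv hR)) (spd_inv hP1).
have spdM : spd M := spd_inv spdN.
have sS := spdS.1. have sP1 := hP1.1. have sQ := hQ.1. have sR := hR.1.
have sQe := spdQe.1. have sM := spdM.1.
set Ai := invmx (eps^-1 *: Rk + P1).
have sAi : Ai^T = Ai by rewrite /Ai trmx_inv spdA.1.
have hM : M = (eps^-1 *: Rk) *m Ai *m P1.
  have h1 : (eps *: invmx Rk + invmx P1) *m ((eps^-1 *: Rk) *m Ai *m P1) = 1%:M.
    rewrite mulmxDl -!mulmxA.
    have -> : eps *: invmx Rk *m (eps^-1 *: Rk *m (Ai *m P1)) = Ai *m P1.
      rewrite mulmxA -scalemxAl -scalemxAr scalerA mulfV ?gt_eqF // scale1r.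
      by rewrite mulVmx // mul1mx.
    rewrite -{1}[Ai *m P1]mul1mx -(mulVmx uP1) -mulmxA -mulmxDr.
    by rewrite -mulmxDl (addrC P1) /Ai mulKVmx // mulVmx.
  have [uN _] := mulmx1_unit h1.
  by rewrite /M -[RHS](mulKmx uN) h1 mulmx1.
have hM2 : (eps^-1 *: Rk) *m Ai *m P1 = P1 - P1 *m Ai *m P1.
  have eS : eps^-1 *: Rk = (eps^-1 *: Rk + P1) - P1 by rewrite addrK.
  by rewrite {1}eS !mulmxBl /Ai mulmxV // mul1mx.
have spdPk : spd Pk := spdD spdQe spdM.
have uPk := spd_unit spdPk.
have sPk := spdPk.1.
split.
- by rewrite /Pk hM hM2 addrA.
- rewrite /ak.
  have eM : M = Pk - eps^-1 *: Q by rewrite /Pk (addrC (eps^-1 *: Q)) addrK.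
  rewrite eM mulmxBl mulmxDr mulmxBr mulKmx // mulmxBr !mulmxA.
  by rewrite addrCA.
have [_ [K K0 hK]] := gauss_all spdA.
set Zk := Num.sqrt ((2 * pi) ^+ d * \det (invmx Pk)).
have Zk0 : 0 < Zk.
  by rewrite sqrtr_gt0 mulr_gt0 ?exprn_gt0 ?mulr_gt0 ?pi_gt0 // det_inv invr_gt0 spd_det.
set Z1 := Num.sqrt ((2 * pi) ^+ d * \det (invmx P1)).
have Z10 : 0 < Z1.
  by rewrite sqrtr_gt0 mulr_gt0 ?exprn_gt0 ?mulr_gt0 ?pi_gt0 // det_inv invr_gt0 spd_det.
set C := 2^-1 * qform Ai (P1 *m a1) - 2^-1 * (eps^-1 * qform Q xs)
   - 2^-1 * qform P1 a1 + ln Z1^-1 + 2^-1 * qform Pk ak.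
exists (K * Zk * expR C); first by rewrite !mulr_gt0 ?expR_gt0.
move=> x.
rewrite /phik /phi1 /gauss_density /lqr_ref.
rewrite (_ : (fun y => _) = fun y => (expR (- (2^-1 * qform (eps^-1 *: Rk + P1) y)
   + ((eps^-1 *: Rk *m x + P1 *m a1)^T *m y) 0 0
   + (- (eps^-1 * (2^-1 * qform Q (x - xs))) - 2^-1 * (eps^-1 * qform Rk x)
      - 2^-1 * qform P1 a1 + ln Z1^-1)))%:E); last first.
  apply/funext => y.
  rewrite invmxK -/Z1 mulrCA -expRD expR_lnM ?invr_gt0 //.
  congr (EFin (expR _)).
  rewrite (qsub _ _ _ _ sR) (qsub _ _ _ _ sP1) qmatD qmatZ linD !lin_bil sS sP1 bmatZ.
  by field; rewrite gt_eqF.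
rewrite hK -/Ai; congr EFin.
rewrite invmxK.
have -> : K * Zk * expR C * (Zk^-1 * expR (- (2^-1 * qform Pk (x - ak))))
    = K * expR (C + - (2^-1 * qform Pk (x - ak))).
  rewrite [expR (C + _)]expRD; move: (expR C) (expR (- _)) => u v; by field; rewrite gt_eqF.
congr (_ * expR _).
have hSAS : (eps^-1 *: Rk) *m Ai *m (eps^-1 *: Rk) = eps^-1 *: Rk - M.
  rewrite hM.
  have eS : eps^-1 *: Rk = (eps^-1 *: Rk) *m Ai *m (eps^-1 *: Rk + P1).
    by rewrite -mulmxA /Ai mulVmx // mulmx1.
  by rewrite {3}eS -mulmxBr addrK.
have hPAS : P1 *m Ai *m (eps^-1 *: Rk) = M.
  have := sM; rewrite {1}hM !trmx_mul [(_ *: Rk)^T]linearZ /= sR sP1 sAi mulmxA => h.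
  by rewrite h.
have ePk : Pk *m ak = eps^-1 *: Q *m xs + M *m a1 by rewrite /ak mulKVmx.
have bPk : bil R Pk ak x = eps^-1 * bil R Q xs x + bil R M a1 x.
  rewrite -{1}sPk -lin_bil ePk linD !lin_bil sQe sM bmatZ //.
have qPk : qform Pk x = eps^-1 * qform Q x + qform M x by rewrite /Pk qmatD qmatZ.
rewrite (qadd _ _ _ _ sAi) [qform Ai (_ *m x)]qmul bmul sP1 hPAS.
rewrite (_ : (eps^-1 *: Rk)^T = eps^-1 *: Rk); last by rewrite linearZ /= sR.
rewrite hSAS.
rewrite (qsub _ _ _ _ sPk) (qsub _ _ _ _ sQ) bPk qPk.
rewrite qmatD qmatN qmatZ /C.
by field; rewrite gt_eqF.
Qed.
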